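(* Let $A$ be a left brace and let $a\in\zeta_2(\star,A)$ be an element of infinite order in $(A,+)$. Let $c=a\star a$. If $c$ has infinite order in $(A,+)$, then the subbrace $\mathbf{br}(2a)$ generated by $2a$ is not an ideal of $A$.
   Context: A left brace is a set $A$ with two operations $+$ and $\cdot$ such that $(A,+)$ is an abelian group, $(A,\cdot)$ is a group, and $a(b+c)=ab+ac-a$ for all $a,b,c\in A$. Put $a\star b=ab-a-b$. A subbrace is a subset which is a subgroup of both $(A,+)$ and $(A,\cdot)$; $\mathbf{br}(x)$ is the intersection of all subbraces containing $x$. A subbrace $L$ is an ideal if $a\star z, z\star a\in L$ for all $a\in A$, $z\in L$. The $\star$-center is $\zeta(\star,A)=\{a: a\star x=x\star a=0\ \forall x\}$ (an ideal); $\zeta_2(\star,A)$ is given by $\zeta_2(\star,A)/\zeta(\star,A)=\zeta(\star,A/\zeta(\star,A))$. *)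

(* Defs.v *)
From HB Require Import structures.
From mathcomp Require Import all_boot all_algebra.
Set Implicit Arguments. Unset Strict Implicit. Unset Printing Implicit Defensive.
Import GRing.Theory.
Local Open Scope ring_scope.

Record left_brace (A : zmodType) (mul : A -> A -> A) (one : A) (inv : A -> A)
  : Prop := LeftBrace {
  brace_mulA : forall a b c, mul a (mul b c) = mul (mul a b) c;
  brace_mul1 : forall a, mul one a = a;
  brace_mul1r : forall a, mul a one = a;
  brace_mulV : forall a, mul (inv a) a = one;
  brace_mulVr : forall a, mul a (inv a) = one;
  brace_distr : forall a b c, mul a (b + c) = mul a b + mul a c - a
}.

Section BraceDefs.
Variables (A : zmodType) (mul : A -> A -> A) (one : A) (inv : A -> A).

Definition star (a b : A) : A := mul a b - a - b.

Definition subbrace (L : A -> Prop) : Prop :=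
  (L 0 /\ (forall x y, L x -> L y -> L (x + y)) /\ (forall x, L x -> L (- x))) /\
  (L one /\ (forall x y, L x -> L y -> L (mul x y)) /\ (forall x, L x -> L (inv x))).

Definition br (x : A) : A -> Prop :=
  fun y => forall L, subbrace L -> L x -> L y.

Definition ideal (L : A -> Prop) : Prop :=
  subbrace L /\ forall a z, L z -> L (star a z) /\ L (star z a).

Definition zeta1 (a : A) : Prop :=
  forall x, star a x = 0 /\ star x a = 0.

(* zeta_2: a + zeta is in the star-center of A/zeta, i.e. (unfolding the
   quotient brace operations) a*x and x*a lie in zeta for all x *)
Definition zeta2 (a : A) : Prop :=
  forall x, zeta1 (star a x) /\ zeta1 (star x a).

Definition add_infinite_order (a : A) : Prop :=
  forall n : nat, (0 < n)%N -> a *+ n != 0.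

End BraceDefs.

(* Main.v *)
Require Import Defs.
From mathcomp Require Import all_boot all_algebra.
From mathcomp Require Import ring zify.
Import GRing.Theory.
Local Open Scope ring_scope.
Set Implicit Arguments. Unset Strict Implicit.

Lemma mulE (A : zmodType) (mul : A -> A -> A) x y : mul x y = x + y + star mul x y.
Proof. by rewrite /star addrC -(addrA (mul x y)) -opprD subrK. Qed.

Lemma star_addr (A : zmodType) (mul : A -> A -> A) one inv (HA : left_brace mul one inv) x y z :
  star mul x (y + z) = star mul x y + star mul x z.
Proof.
rewrite /star (brace_distr HA) addrACA (addrACA (mul x y)) opprD.
by rewrite -(addrA (mul x y + mul x z)).
Qed.

Lemma star_mul (A : zmodType) (mul : A -> A -> A) one inv (HA : left_brace mul one inv) x y z :
  star mul (mul x y) z = star mul y z + star mul x z + star mul x (star mul y z).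
Proof.
apply: (@addrI _ (mul x y + z)).
rewrite -mulE -(brace_mulA HA) (mulE mul x (mul y z)) (mulE mul y z) !(star_addr HA) (mulE mul x y).
by rewrite !addrA [LHS](ACl (1*2*7*8*9*3*4*5*6*10*11*12*13*14*15*16*17*18*19*20*21)).
Qed.

Lemma mulx0 (A : zmodType) (mul : A -> A -> A) one inv (HA : left_brace mul one inv) x :
  mul x 0 = x.
Proof.
have := brace_distr HA x 0 0; rewrite addr0 => H.
by apply: (@addrI _ (mul x 0)); rewrite [X in _ = X + _]H subrK.
Qed.

Lemma one0 (A : zmodType) (mul : A -> A -> A) one inv (HA : left_brace mul one inv) :
  one = 0.
Proof. by rewrite -[LHS](mulx0 HA) (brace_mul1 HA). Qed.

Lemma star0l (A : zmodType) (mul : A -> A -> A) one inv (HA : left_brace mul one inv) y :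
  star mul 0 y = 0.
Proof.
rewrite /star; have -> : mul 0 y = y by rewrite -{1}(one0 HA) (brace_mul1 HA).
by rewrite subr0 subrr.
Qed.

Lemma starx0 (A : zmodType) (mul : A -> A -> A) one inv (HA : left_brace mul one inv) x :
  star mul x 0 = 0.
Proof.
have := star_addr HA x 0 0; rewrite addr0 => H.
by apply: (@addrI _ (star mul x 0)); rewrite addr0 -H.
Qed.

Lemma starxN (A : zmodType) (mul : A -> A -> A) one inv (HA : left_brace mul one inv) x y :
  star mul x (- y) = - star mul x y.
Proof.
have := star_addr HA x y (- y); rewrite subrr (starx0 HA) => H.
by apply: (@addrI _ (star mul x y)); rewrite -H subrr.
Qed.

Lemma starxMn (A : zmodType) (mul : A -> A -> A) one inv (HA : left_brace mul one inv) x y n :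
  star mul x (y *+ n) = star mul x y *+ n.
Proof.
elim: n => [|n IH]; first by rewrite !mulr0n (starx0 HA).
by rewrite !mulrS (star_addr HA) IH.
Qed.

Lemma starxMz (A : zmodType) (mul : A -> A -> A) one inv (HA : left_brace mul one inv) x y k :
  star mul x (y *~ k) = star mul x y *~ k.
Proof.
case: k => n; first exact: (starxMn HA).
by rewrite NegzE !mulrNz (starxN HA); congr (- _); exact: (starxMn HA).
Qed.

Lemma star_zr (A : zmodType) (mul : A -> A -> A) one inv (HA : left_brace mul one inv) s x y :
  zeta1 mul s -> star mul (x + s) y = star mul x y.
Proof.
move=> Hs.
have <- : mul x s = x + s by rewrite mulE (proj2 (Hs x)) addr0.
by rewrite (star_mul HA) (proj1 (Hs y)) (starx0 HA) add0r addr0.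
Qed.

Lemma zetaN (A : zmodType) (mul : A -> A -> A) one inv (HA : left_brace mul one inv) s :
  zeta1 mul s -> zeta1 mul (- s).
Proof.
move=> Hs y; split; last by rewrite (starxN HA) (proj2 (Hs y)) oppr0.
have E : mul s (- s) = 0 by rewrite mulE subrr (proj1 (Hs (- s))) add0r.
have := star_mul HA s (- s) y.
by rewrite E (star0l HA) (proj1 (Hs y)) (proj1 (Hs _)) !addr0 => <-.
Qed.

Lemma zetaD (A : zmodType) (mul : A -> A -> A) one inv (HA : left_brace mul one inv) s t :
  zeta1 mul s -> zeta1 mul t -> zeta1 mul (s + t).
Proof.
move=> Hs Ht y; split; first by rewrite (star_zr HA _ _ Ht) (proj1 (Hs y)).
by rewrite (star_addr HA) (proj2 (Hs y)) (proj2 (Ht y)) addr0.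
Qed.

Lemma zetaMz (A : zmodType) (mul : A -> A -> A) one inv (HA : left_brace mul one inv) s k :
  zeta1 mul s -> zeta1 mul (s *~ k).
Proof.
move=> Hs.
have Hn : forall n, zeta1 mul (s *+ n).
  elim=> [|n IH]; first by move=> y; rewrite mulr0n (star0l HA) (starx0 HA).
  by rewrite mulrS; apply: (zetaD HA).
case: k => n; first exact: Hn.
by rewrite NegzE mulrNz; apply: (zetaN HA); exact: Hn.
Qed.

Lemma star_step (A : zmodType) (mul : A -> A -> A) one inv (HA : left_brace mul one inv) a x :
  zeta2 mul a -> star mul (x + a) a = star mul x a + star mul a a.
Proof.
move=> Ha.
have Zt : zeta1 mul (star mul x a) := (Ha x).2.
have Zc : zeta1 mul (star mul a a) := (Ha a).1.
have E : mul x (a - star mul x a) = x + a.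
  have H0 : star mul x (a - star mul x a) = star mul x a.
    by rewrite (star_addr HA) (starxN HA) (proj2 (Zt x)) oppr0 addr0.
  by rewrite mulE H0 -(addrA x) subrK.
rewrite -E (star_mul HA) (star_zr HA _ _ (zetaN HA Zt)) (proj2 (Zc x)).
by rewrite addr0 addrC.
Qed.

Lemma star_aMz (A : zmodType) (mul : A -> A -> A) one inv (HA : left_brace mul one inv) a n :
  zeta2 mul a -> star mul (a *~ n) a = star mul a a *~ n.
Proof.
move=> Ha.
case: n => n.
  change (star mul (a *+ n) a = star mul a a *+ n).
  elim: n => [|n IH]; first by rewrite !mulr0n (star0l HA).
  by rewrite !mulrSr (star_step HA _ Ha) IH.
rewrite NegzE !mulrNz.
change (star mul (- (a *+ n.+1)) a = - (star mul a a *+ n.+1)).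
elim: n.+1 => [|k IH]; first by rewrite !mulr0n oppr0 (star0l HA).
have := star_step HA (- (a *+ k.+1)) Ha.
rewrite mulrSr opprD subrK IH => E.
by rewrite -[LHS](addrK (star mul a a)) -E mulrSr (opprD (star mul a a *+ k)).
Qed.

Lemma star_formula (A : zmodType) (mul : A -> A -> A) one inv (HA : left_brace mul one inv) a n m k l :
  zeta2 mul a ->
  star mul (a *~ n + star mul a a *~ m) (a *~ k + star mul a a *~ l) = star mul a a *~ (n * k).
Proof.
move=> Ha.
have Zc : zeta1 mul (star mul a a) := (Ha a).1.
rewrite (star_zr HA _ _ (zetaMz HA m Zc)) (star_addr HA) !(starxMz HA) (star_aMz HA _ Ha).
by rewrite (proj2 (Zc _)) mul0rz addr0 mulrzA.
Qed.

Lemma comb (A : zmodType) (a c : A) p q r s t :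
  a *~ p + c *~ q + (a *~ r + c *~ s) + c *~ t = a *~ (p + r) + c *~ (q + s + t).
Proof.
rewrite !mulrzDr !addrA. by rewrite [LHS](ACl (1*3*2*4*5)).
Qed.

Lemma inf_ord (A : zmodType) (x : A) k :
  add_infinite_order x -> x *~ k = 0 -> k = 0.
Proof.
move=> Hx; case: k => n.
  case: n => [//|n] H; have := Hx n.+1 isT; by rewrite -H /= eqxx.
rewrite NegzE mulrNz => /eqP; rewrite oppr_eq0 => H.
by have := Hx n.+1 isT; rewrite H.
Qed.

Theorem lemma3p7 (A : zmodType) (mul : A -> A -> A) (one : A) (inv : A -> A)
  (HA : left_brace mul one inv) (a : A) :
  zeta2 mul a -> add_infinite_order a ->
  add_infinite_order (star mul a a) ->
  ~ ideal mul one inv (br mul one inv (a *+ 2)).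
Proof.
move=> Ha _ Hc [_ Hid].
set c := star mul a a.
have Zc : zeta1 mul c := (Ha a).1.
pose L y := exists n m : int, y = a *~ (2 * n) + c *~ (4 * m).
have HL : subbrace mul one inv L.
  split; split.
  - by exists 0, 0; rewrite !mulr0 !mulr0z addr0.
  - split.
      move=> x y [n [m ->]] [k [l ->]]; exists (n + k), (m + l).
      by rewrite !mulrDr !mulrzDr !addrA [LHS](ACl (1*3*2*4)).
    move=> x [n [m ->]]; exists (- n), (- m).
    by rewrite !mulrN !mulrNz opprD.
  - by rewrite (one0 HA); exists 0, 0; rewrite !mulr0 !mulr0z addr0.
  split.
    move=> x y [n [m ->]] [k [l ->]]; exists (n + k), (m + l + n * k).
    rewrite mulE (star_formula HA _ _ _ _ Ha) -/c comb.
    by congr (_ + _); congr (_ *~ _); ring.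
  move=> x [n [m ->]].
  set y := a *~ (2 * - n) + c *~ (4 * (n * n - m)).
  have E : mul (a *~ (2 * n) + c *~ (4 * m)) y = 0.
    rewrite mulE (star_formula HA _ _ _ _ Ha) -/c comb.
    have -> : 2 * n + 2 * - n = 0 by ring.
    have -> : 4 * m + 4 * (n * n - m) + 2 * n * (2 * - n) = 0 by ring.
    by rewrite !mulr0z addr0.
  exists (- n), (n * n - m).
  rewrite -(one0 HA) in E.
  by rewrite -[LHS](brace_mul1r HA) -E (brace_mulA HA) (brace_mulV HA) (brace_mul1 HA).
have L2 : L (a *+ 2) by exists 1, 0; rewrite mulr1 mulr0 mulr0z addr0 mulrz_nat.
have Hb : br mul one inv (a *+ 2) (a *+ 2) by move=> M _.
have := (Hid a (a *+ 2) Hb).1 L HL L2.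
rewrite (starxMn HA) -/c => -[n [m E]].
have E2 := congr1 (star mul a) E.
rewrite (starxMn HA) (proj2 (Zc a)) mul0rn (star_addr HA) !(starxMz HA) -/c in E2.
rewrite (proj2 (Zc a)) mul0rz addr0 in E2.
have n0 : 2 * n = 0 by apply: (inf_ord Hc); rewrite -E2.
move: E; rewrite n0 mulr0z add0r => /eqP; rewrite -subr_eq0 -mulrz_nat -mulrzBr => /eqP E.
have := inf_ord Hc E; lia.
Qed.
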